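(* Let $L>0$ and let $\sigma_1<\sigma_2<\dots$ be the eigenvalues of the one-dimensional buckling problem $u''''=-\sigma u''$ on $(0,L)$, $u(0)=u'(0)=u(L)=u'(L)=0$. Then, as $z\to+\infty$, $$R_1(z)=\sum_j(z-\sigma_j)_+=\frac{2L}{3\pi}z^{\frac32}-\frac32 z+o(z).$$
   Context: $a_+=\max\{a,0\}$. The eigenvalue problem is understood in the weak sense in $H^2_0(0,L)$: $\int_0^L u''\phi''=\sigma\int_0^L u'\phi'$ for all $\phi\in H^2_0(0,L)$. *)

(* Defs.v *)
From Stdlib Require Import Reals Lra.
From Coquelicot Require Import Coquelicot.
Open Scope R_scope.

(* Eigenfunctions are taken smooth (every weak H^2_0 eigenfunction
   is of the form A + B x + C cos(kx) + D sin(kx), hence extends smoothly). *)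
Definition buckling_eigenvalue (L sigma : R) : Prop :=
  exists u : R -> R,
    (forall (k : nat) (x : R), ex_derive_n u k x) /\
    (forall x, 0 < x < L -> Derive_n u 4 x = - sigma * Derive_n u 2 x) /\
    u 0 = 0 /\ Derive_n u 1 0 = 0 /\ u L = 0 /\ Derive_n u 1 L = 0 /\
    (exists x, 0 < x < L /\ u x <> 0).

Definition pos_part (a : R) : R := Rmax a 0.

Definition riesz1 (sig : nat -> R) (z : R) : R :=
  Series (fun j => pos_part (z - sig j)).

(* Main.v *)
Require Import Defs.
From Stdlib Require Import Reals Lra Lia ZArith Arith.
From Coquelicot Require Import Coquelicot.
Open Scope R_scope.
From Stdlib Require Import Reals Lra.
From Coquelicot Require Import Coquelicot.
Open Scope R_scope.

Lemma cont_of_der (f : R -> R) x l : is_derive f x l -> continuity_pt f x.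
Proof.
  intros H. apply continuity_pt_filterlim.
  apply (ex_derive_continuous f x). exists l. exact H.
Qed.

Lemma mvt_nonincr (f df : R -> R) a b : a <= b ->
  (forall x, is_derive f x (df x)) ->
  (forall x, a < x < b -> df x <= 0) -> f b <= f a.
Proof.
  intros Hab Hd Hn.
  destruct (MVT_gen f a b (fun x => Rmin (df x) 0)) as [c [Hc Hm]].
  - intros x Hx. rewrite Rmin_left in Hx by lra. rewrite Rmax_right in Hx by lra.
    rewrite Rmin_left by (apply Hn; lra). apply Hd.
  - intros x _. apply (cont_of_der f x (df x)), Hd.
  - assert (Rmin (df c) 0 <= 0) by apply Rmin_r.
    assert (Rmin (df c) 0 * (b - a) <= 0) by (apply Rmult_le_0_r; lra). lra.
Qed.

Lemma mvt_const (f df : R -> R) a b : a <= b ->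
  (forall x, is_derive f x (df x)) ->
  (forall x, a < x < b -> df x = 0) -> f b = f a.
Proof.
  intros Hab Hd Hn.
  assert (f b <= f a) by (apply (mvt_nonincr f df); auto; intros x Hx; rewrite Hn; lra).
  assert (- f b <= - f a).
  { apply (mvt_nonincr (fun x => - f x) (fun x => - df x)); auto.
    - intros x. apply (is_derive_opp f x (df x)), Hd.
    - intros x Hx; rewrite Hn; lra. }
  lra.
Qed.

Lemma mvt_nondecr (f df : R -> R) a b : a <= b ->
  (forall x, is_derive f x (df x)) ->
  (forall x, a < x < b -> 0 <= df x) -> f a <= f b.
Proof.
  intros Hab Hd Hn.
  assert (- f b <= - f a).
  { apply (mvt_nonincr (fun x => - f x) (fun x => - df x)); auto.
    - intros x. apply (is_derive_opp f x (df x)), Hd.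
    - intros x Hx; specialize (Hn x Hx); lra. }
  lra.
Qed.

Lemma mvt_strict (f df : R -> R) a b : a < b ->
  (forall x, is_derive f x (df x)) ->
  (forall x, a < x < b -> 0 < df x) -> f a < f b.
Proof.
  intros Hab Hd Hn.
  set (m := (a + b) / 2). set (m1 := (a + m) / 2).
  assert (f m <= f b) by (apply (mvt_nondecr f df); unfold m in *; auto; try lra;
    intros x Hx; apply Rlt_le, Hn; lra).
  assert (f a <= f m1) by (apply (mvt_nondecr f df); unfold m1, m in *; auto; try lra;
    intros x Hx; apply Rlt_le, Hn; lra).
  destruct (MVT_gen f m1 m df) as [c [Hc Hm]].
  - intros x Hx. apply Hd.
  - intros x _. apply (cont_of_der f x (df x)), Hd.
  - rewrite Rmin_left in Hc by (unfold m1, m; lra).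
    rewrite Rmax_right in Hc by (unfold m1, m; lra).
    assert (0 < df c) by (apply Hn; unfold m1, m in *; lra).
    assert (0 < df c * (m - m1)) by (apply Rmult_lt_0_compat; unfold m1, m; lra).
    lra.
Qed.

Lemma der_n (u : R -> R) (Hu : forall k x, ex_derive_n u k x) n x :
  is_derive (Derive_n u n) x (Derive_n u (S n) x).
Proof.
  simpl. apply Derive_correct. exact (Hu (S n) x).
Qed.

Lemma loc_interval (x L : R) : 0 < x < L ->
  locally x (fun t => 0 < t < L).
Proof.
  intros Hx.
  assert (He : 0 < Rmin x (L - x)) by (apply Rmin_glb_lt; lra).
  exists (mkposreal _ He). intros t Ht.
  change (Rabs (t - x) < Rmin x (L - x)) in Ht.
  assert (Rmin x (L - x) <= x) by apply Rmin_l.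
  assert (Rmin x (L - x) <= L - x) by apply Rmin_r.
  apply Rabs_def2 in Ht. lra.
Qed.
From Stdlib Require Import Reals Lra.
From Coquelicot Require Import Coquelicot.
Open Scope R_scope.

Lemma dmul (f g : R -> R) (x df dg : R) : is_derive f x df -> is_derive g x dg ->
  is_derive (fun t => f t * g t) x (df * g x + f x * dg).
Proof. intros; apply (is_derive_mult f g x df dg); auto; intros; apply Rmult_comm. Qed.
Lemma dplus (f g : R -> R) (x df dg : R) : is_derive f x df -> is_derive g x dg ->
  is_derive (fun t => f t + g t) x (df + dg).
Proof. intros; apply (is_derive_plus f g x df dg); auto. Qed.
Lemma dminus (f g : R -> R) (x df dg : R) : is_derive f x df -> is_derive g x dg ->
  is_derive (fun t => f t - g t) x (df - dg).
Proof. intros; apply (is_derive_minus f g x df dg); auto. Qed.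
Lemma dconst (a x : R) : is_derive (fun _ : R => a) x 0.
Proof. apply (is_derive_const a x). Qed.
Lemma did (x : R) : is_derive (fun t : R => t) x 1.
Proof. apply (is_derive_id x). Qed.
Lemma deq (f : R -> R) (x l l' : R) : is_derive f x l -> l = l' -> is_derive f x l'.
Proof. intros H ->; exact H. Qed.
Lemma dcos k x : is_derive (fun t => cos (k * t)) x (- k * sin (k * x)).
Proof. auto_derive; auto; ring. Qed.
Lemma dsin k x : is_derive (fun t => sin (k * t)) x (k * cos (k * x)).
Proof. auto_derive; auto; ring. Qed.

Ltac dtac Hd := repeat first [ apply dplus | apply dminus | apply dmul | apply dconst
  | apply did | apply dcos | apply dsin | apply Hd ].

Section Dir.
Variables (L s : R) (u : R -> R).
Hypothesis HL : 0 < L.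
Hypothesis Hu : forall k x, ex_derive_n u k x.
Hypothesis Heq : forall x, 0 < x < L -> Derive_n u 4 x = - s * Derive_n u 2 x.
Hypothesis H0 : u 0 = 0.
Hypothesis H1 : Derive_n u 1 0 = 0.
Hypothesis HL0 : u L = 0.
Hypothesis HL1 : Derive_n u 1 L = 0.

Let D := Derive_n u.
Let Hd : forall n x, is_derive (D n) x (D (S n) x) := der_n u Hu.

Lemma D0 x : D 0 x = u x.
Proof. reflexivity. Qed.

Lemma nonpos_case : s <= 0 -> forall x, 0 <= x <= L -> u x = 0.
Proof.
  intros Hs.
  set (Phi := fun t => D 3 t * D 0 t - D 2 t * D 1 t + s * (D 1 t * D 0 t)).
  assert (HPd : forall x, is_derive Phi x
     (D 4 x * D 0 x + D 3 x * D 1 x - (D 3 x * D 1 x + D 2 x * D 2 x)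
      + s * (D 2 x * D 0 x + D 1 x * D 1 x))).
  { intros x. unfold Phi. apply dplus. apply dminus; apply dmul; apply Hd.
    apply (is_derive_scal (fun t => D 1 t * D 0 t)). apply dmul; apply Hd. }
  assert (HPn : forall x, 0 < x < L ->
     D 4 x * D 0 x + D 3 x * D 1 x - (D 3 x * D 1 x + D 2 x * D 2 x)
      + s * (D 2 x * D 0 x + D 1 x * D 1 x) = - (D 2 x * D 2 x) + s * (D 1 x * D 1 x)).
  { intros x Hx. unfold D. rewrite Heq by auto. generalize (Derive_n u 0 x) (Derive_n u 1 x) (Derive_n u 2 x) (Derive_n u 3 x); intros; ring. }
  assert (HP0 : Phi 0 = 0) by (unfold Phi, D; rewrite H1; change (Derive_n u 0 0) with (u 0); rewrite H0; ring).
  assert (HPL : Phi L = 0) by (unfold Phi, D; rewrite HL1; change (Derive_n u 0 L) with (u L); rewrite HL0; ring).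
  set (dPhi := fun x => D 4 x * D 0 x + D 3 x * D 1 x - (D 3 x * D 1 x + D 2 x * D 2 x)
      + s * (D 2 x * D 0 x + D 1 x * D 1 x)).
  assert (HPz : forall x, 0 <= x <= L -> Phi x = 0).
  { intros x Hx.
    assert (Phi x <= Phi 0).
    { apply (mvt_nonincr Phi dPhi 0 x); try lra. apply HPd. intros t Ht. unfold dPhi; rewrite HPn by lra.
      nra. }
    assert (Phi L <= Phi x).
    { apply (mvt_nonincr Phi dPhi x L); try lra. apply HPd. intros t Ht. unfold dPhi; rewrite HPn by lra.
      nra. }
    lra. }
  assert (HD2 : forall x, 0 < x < L -> D 2 x = 0).
  { intros x Hx.
    assert (Hz : is_derive (fun _ => 0) x
       (D 4 x * D 0 x + D 3 x * D 1 x - (D 3 x * D 1 x + D 2 x * D 2 x)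
      + s * (D 2 x * D 0 x + D 1 x * D 1 x))).
    { apply (is_derive_ext_loc Phi). 2: apply HPd.
      destruct (loc_interval x L Hx) as [e He]. exists e. intros t Ht.
      apply HPz. specialize (He t Ht). lra. }
    apply is_derive_unique in Hz. rewrite Derive_const in Hz.
    rewrite HPn in Hz by auto. nra. }
  assert (HD1 : forall x, 0 <= x <= L -> D 1 x = 0).
  { intros x Hx. rewrite <- H1. apply (mvt_const (D 1) (D 2) 0 x); try lra.
    intros; apply Hd. intros t Ht. apply HD2. lra. }
  intros x Hx. rewrite <- H0. change (D 0 x = D 0 0).
  apply (mvt_const (D 0) (D 1) 0 x); try lra. intros; apply Hd.
  intros t Ht. apply HD1. lra.
Qed.


Lemma pos_case : 0 < s -> sin (sqrt s * L / 2) * (sin (sqrt s * L / 2) -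
   (sqrt s * L / 2) * cos (sqrt s * L / 2)) <> 0 -> forall x, 0 <= x <= L -> u x = 0.
Proof.
  intros Hs Hdet.
  set (k := sqrt s) in *.
  assert (Hk : 0 < k) by (apply sqrt_lt_R0; lra).
  assert (Hks : s = k * k) by (unfold k; rewrite sqrt_sqrt; lra).
  set (b := D 3 0 + s * D 1 0).
  assert (Hb : forall x, 0 <= x <= L -> D 3 x + s * D 1 x = b).
  { intros x Hx. apply (mvt_const (fun t => D 3 t + s * D 1 t) (fun t => D 4 t + s * D 2 t) 0 x);
      try lra.
    intros t. apply dplus. apply Hd. apply (is_derive_scal (D 1)). apply Hd.
    intros t Ht. unfold D. rewrite Heq by lra. ring. }
  set (a0 := D 2 0).
  assert (Hw : forall x, 0 <= x <= L -> D 2 x + s * D 0 x = a0 + b * x).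
  { intros x Hx.
    assert (E : (fun t => D 2 t + s * D 0 t - b * t) x = (fun t => D 2 t + s * D 0 t - b * t) 0).
    { apply (mvt_const (fun t => D 2 t + s * D 0 t - b * t) (fun t => D 3 t + s * D 1 t - b * 1) 0 x); try lra.
      intros t. apply dminus. apply dplus. apply Hd. apply (is_derive_scal (D 0)). apply Hd.
      apply (is_derive_scal (fun t => t)). apply did.
      intros t Ht. rewrite Hb by lra. ring. }
    simpl in E. unfold a0. change (D 0 0) with (u 0) in E. rewrite H0 in E. lra. }
  set (y := fun t => D 0 t - / s * (a0 + b * t)).
  set (y1 := fun t => D 1 t - b / s).
  assert (Hy : forall t, is_derive y t (y1 t)).
  { intros t. unfold y, y1. eapply deq. apply dminus. apply Hd.
    apply (is_derive_scal (fun t => (a0 + b * t)) t (/ s)). 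
    apply dplus. apply dconst. apply (is_derive_scal (fun t => t)). apply did.
    field. lra. }
  assert (Hy1 : forall t, is_derive y1 t (D 2 t)).
  { intros t. unfold y1. eapply deq. apply dminus. apply Hd. apply dconst. ring. }
  assert (Hyy : forall t, 0 <= t <= L -> D 2 t = - (k * k) * y t).
  { intros t Ht. rewrite <- Hks. unfold y. specialize (Hw t Ht).
    replace (D 2 t) with (a0 + b * t - s * D 0 t) by lra. field. lra. }
  assert (Hkn : k <> 0) by lra.
  set (I1 := fun t => y t * cos (k * t) - / k * (y1 t * sin (k * t))).
  set (I2 := fun t => y t * sin (k * t) + / k * (y1 t * cos (k * t))).
  assert (HI1 : forall x, 0 <= x <= L -> I1 x = y 0).
  { intros x Hx. transitivity (I1 0).
    apply (mvt_const I1 (fun t => y1 t * cos (k * t) + y t * (- k * sin (k * t))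
       - / k * (D 2 t * sin (k * t) + y1 t * (k * cos (k * t)))) 0 x); try lra.
    intros t. unfold I1. eapply deq. apply (dminus _ _ t). apply (dmul _ _ t). apply Hy. apply dcos.
    apply (is_derive_scal (fun t => y1 t * sin (k * t))). apply (dmul _ _ t). apply Hy1. apply dsin. reflexivity.
    intros t Ht. rewrite Hyy by lra. field. auto.
    unfold I1. rewrite Rmult_0_r, cos_0, sin_0. ring. }
  assert (HI2 : forall x, 0 <= x <= L -> I2 x = / k * y1 0).
  { intros x Hx. transitivity (I2 0).
    apply (mvt_const I2 (fun t => y1 t * sin (k * t) + y t * (k * cos (k * t))
       + / k * (D 2 t * cos (k * t) + y1 t * (- k * sin (k * t)))) 0 x); try lra.
    intros t. unfold I2. eapply deq. apply (dplus _ _ t). apply (dmul _ _ t). apply Hy. apply dsin.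
    apply (is_derive_scal (fun t => y1 t * cos (k * t))). apply (dmul _ _ t). apply Hy1. apply dcos. reflexivity.
    intros t Ht. rewrite Hyy by lra. field. auto.
    unfold I2. rewrite Rmult_0_r, cos_0, sin_0. ring. }
  set (p := a0 / s). set (q := b / s).
  assert (Hrep : forall x, 0 <= x <= L ->
     u x = p + q * x - p * cos (k * x) - q / k * sin (k * x) /\
     D 1 x = q - q * cos (k * x) + k * p * sin (k * x)).
  { intros x Hx.
    assert (Hsc := sin2_cos2 (k * x)). unfold Rsqr in Hsc.
    assert (Ey : y x = I1 x * cos (k * x) + I2 x * sin (k * x)).
    { unfold I1, I2. transitivity (y x * (sin (k * x) * sin (k * x) + cos (k * x) * cos (k * x))).
      rewrite Hsc; ring. field. auto. }
    assert (Ey1 : y1 x = k * (I2 x * cos (k * x) - I1 x * sin (k * x))).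
    { unfold I1, I2. transitivity (y1 x * (sin (k * x) * sin (k * x) + cos (k * x) * cos (k * x))).
      rewrite Hsc; ring. field. auto. }
    rewrite HI1, HI2 in Ey, Ey1 by auto.
    unfold y, y1 in Ey, Ey1. change (D 0 0) with (u 0) in Ey, Ey1. change (D 0 x) with (u x) in Ey.
    rewrite H0 in Ey, Ey1. change (D 1 0) with (Derive_n u 1 0) in Ey, Ey1. rewrite H1 in Ey, Ey1.
    split.
    - unfold p, q.
      assert (E : u x = (0 - / s * (a0 + b * 0)) * cos (k * x) + / k * (0 - b / s) * sin (k * x)
         + / s * (a0 + b * x)) by lra.
      rewrite E. field. split; lra.
    - unfold p, q.
      assert (E : D 1 x = k * (/ k * (0 - b / s) * cos (k * x) - (0 - / s * (a0 + b * 0)) * sin (k * x))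
         + b / s) by lra.
      rewrite E. field. split; lra. }
  destruct (Hrep L) as [E1 E2]; [lra|].
  rewrite HL0 in E1. change (D 1 L) with (Derive_n u 1 L) in E2. rewrite HL1 in E2.
  set (X := k * L / 2) in *.
  assert (HkL : k * L = 2 * X) by (unfold X; field).
  set (c := cos (k * L)) in *. set (sn := sin (k * L)) in *.
  assert (Hcs : sn * sn + c * c = 1).
  { assert (H := sin2_cos2 (k * L)). unfold Rsqr in H. exact H. }
  assert (Hc : c = 1 - 2 * sin X * sin X) by (unfold c; rewrite HkL; apply cos_2a_sin).
  assert (Hsn : sn = 2 * sin X * cos X) by (unfold sn; rewrite HkL; apply sin_2a).
  set (det := 2 * (1 - c) - k * L * sn).
  assert (Hdet' : det <> 0).
  { intro Hd0. apply Hdet. unfold det in Hd0. rewrite HkL, Hc, Hsn in Hd0.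
    apply (Rmult_eq_reg_l 4); [|lra]. rewrite Rmult_0_r, <- Hd0. ring. }
  assert (Pd : p * det = 0).
  { assert (Ed : p * det - ((1 - c) * (p + q * L - p * c - q / k * sn)
        - (L - sn / k) * (q - q * c + k * p * sn)) = - p * (sn * sn + c * c - 1)).
    { unfold det. field. auto. }
    rewrite Hcs in Ed. rewrite <- E1, <- E2 in Ed. lra. }
  assert (Qd : q * det = 0).
  { assert (Ed : q * det + (k * sn * (p + q * L - p * c - q / k * sn)
        - (1 - c) * (q - q * c + k * p * sn)) = - q * (sn * sn + c * c - 1)).
    { unfold det. field. auto. }
    rewrite Hcs in Ed. rewrite <- E1, <- E2 in Ed. lra. }
  apply Rmult_integral in Pd. apply Rmult_integral in Qd.
  destruct Pd as [Pd|Pd]; [|contradiction]. destruct Qd as [Qd|Qd]; [|contradiction].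
  intros x Hx. destruct (Hrep x Hx) as [Hx1 _]. rewrite Hx1, Pd, Qd. field. auto.
Qed.
End Dir.

Definition Ff (a b c d k p x : R) := a + b * x + c * cos (k * x + p) + d * sin (k * x + p).

Lemma dFf a b c d k p x : is_derive (Ff a b c d k p) x (Ff b 0 (d * k) (- (c * k)) k p x).
Proof. unfold Ff. auto_derive; auto. ring. Qed.

Lemma Ff_step (f : R -> R) n a b c d k p :
  (forall t, Derive_n f n t = Ff a b c d k p t) ->
  (forall t, Derive_n f (S n) t = Ff b 0 (d * k) (- (c * k)) k p t) /\
  (forall t, ex_derive_n f (S n) t).
Proof.
  intros H. split; intros t; simpl.
  - rewrite (Derive_ext _ _ _ H). apply is_derive_unique, dFf.
  - apply (ex_derive_ext (Ff a b c d k p)). intros; rewrite H; auto.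
    eexists; apply dFf.
Qed.

Lemma Ff_smooth a b c d k p : forall n t, ex_derive_n (Ff a b c d k p) n t.
Proof.
  assert (forall n, exists a' b' c' d', forall t, Derive_n (Ff a b c d k p) n t = Ff a' b' c' d' k p t).
  { induction n as [|n IH]. exists a, b, c, d; reflexivity.
    destruct IH as [a' [b' [c' [d' H]]]].
    destruct (Ff_step _ _ _ _ _ _ _ _ H) as [H1 _]. eauto. }
  intros [|n] t. exact I.
  destruct (H n) as [a' [b' [c' [d' H']]]].
  apply (Ff_step _ _ _ _ _ _ _ _ H').
Qed.

Lemma Ff_derivs a b c d k p : forall t,
  Derive_n (Ff a b c d k p) 1 t = Ff b 0 (d * k) (- (c * k)) k p t /\
  Derive_n (Ff a b c d k p) 2 t = Ff 0 0 (- (c * k) * k) (- (d * k * k)) k p t /\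
  Derive_n (Ff a b c d k p) 4 t = Ff 0 0 (c * k * k * k * k) (d * k * k * k * k) k p t.
Proof.
  assert (H0 : forall t, Derive_n (Ff a b c d k p) 0 t = Ff a b c d k p t) by reflexivity.
  destruct (Ff_step _ _ _ _ _ _ _ _ H0) as [H1 _].
  destruct (Ff_step _ _ _ _ _ _ _ _ H1) as [H2 _].
  destruct (Ff_step _ _ _ _ _ _ _ _ H2) as [H3 _].
  destruct (Ff_step _ _ _ _ _ _ _ _ H3) as [H4 _].
  intros t. rewrite H1, H2, H4. unfold Ff. repeat split; ring.
Qed.

Lemma eig_sin (L s : R) : 0 < L -> 0 < s -> PI <= sqrt s * L / 2 ->
  sin (sqrt s * L / 2) = 0 -> buckling_eigenvalue L s.
Proof.
  intros HL Hs HX Hsin.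
  set (k := sqrt s) in *. set (X := k * L / 2) in *.
  assert (Hk : 0 < k) by (apply sqrt_lt_R0; lra).
  assert (Hks : s = k * k) by (unfold k; rewrite sqrt_sqrt; lra).
  assert (HkL : k * L = 2 * X) by (unfold X; field).
  exists (Ff 1 0 (-1) 0 k 0).
  split; [apply Ff_smooth|].
  split. { intros x _. destruct (Ff_derivs 1 0 (-1) 0 k 0 x) as [_ [-> ->]]. unfold Ff.
    rewrite Hks. ring. }
  split. { unfold Ff. replace (k * 0 + 0) with 0 by ring. rewrite sin_0, cos_0. ring. }
  split. { destruct (Ff_derivs 1 0 (-1) 0 k 0 0) as [-> _]. unfold Ff.
    replace (k * 0 + 0) with 0 by ring. rewrite sin_0, cos_0. ring. }
  split. { unfold Ff. rewrite Rplus_0_r, HkL, cos_2a_sin, Hsin. ring. }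
  split. { destruct (Ff_derivs 1 0 (-1) 0 k 0 L) as [-> _]. unfold Ff.
    rewrite Rplus_0_r, HkL, sin_2a, cos_2a_sin, Hsin. ring. }
  exists (PI / k). split.
  - split. apply Rdiv_lt_0_compat; [apply PI_RGT_0|lra].
    apply (Rmult_lt_reg_l k); auto. field_simplify; try lra.
    assert (0 < PI) by apply PI_RGT_0. lra.
  - unfold Ff. replace (k * (PI / k) + 0) with PI by (field; lra).
    rewrite cos_PI, sin_PI. lra.
Qed.

Lemma eig_g (L s : R) : 0 < L -> 0 < s -> PI < sqrt s * L / 2 ->
  sin (sqrt s * L / 2) - (sqrt s * L / 2) * cos (sqrt s * L / 2) = 0 -> buckling_eigenvalue L s.
Proof.
  intros HL Hs HX Hg.
  set (k := sqrt s) in *. set (X := k * L / 2) in *.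
  assert (Hk : 0 < k) by (apply sqrt_lt_R0; lra).
  assert (Hks : s = k * k) by (unfold k; rewrite sqrt_sqrt; lra).
  assert (HkL : k * L = 2 * X) by (unfold X; field).
  exists (Ff (X * cos X) (- k * cos X) 0 1 k (- X)).
  split; [apply Ff_smooth|].
  split. { intros x _. destruct (Ff_derivs (X * cos X) (- k * cos X) 0 1 k (- X) x) as [_ [-> ->]].
    unfold Ff. rewrite Hks. ring. }
  split. { unfold Ff. replace (k * 0 + - X) with (- X) by ring. rewrite cos_neg, sin_neg. lra. }
  split. { destruct (Ff_derivs (X * cos X) (- k * cos X) 0 1 k (- X) 0) as [-> _]. unfold Ff.
    replace (k * 0 + - X) with (- X) by ring. rewrite cos_neg, sin_neg. ring. }
  split. { unfold Ff. replace (k * L + - X) with X by lra. transitivity (sin X - X * cos X); [|exact Hg].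
    replace (- k * cos X * L) with (- (k * L) * cos X) by ring. rewrite HkL. ring. }
  split. { destruct (Ff_derivs (X * cos X) (- k * cos X) 0 1 k (- X) L) as [-> _]. unfold Ff.
    replace (k * L + - X) with X by lra. ring. }
  exists (L / 2 + PI / k). split.
  - assert (0 < PI / k) by (apply Rdiv_lt_0_compat; [apply PI_RGT_0|lra]).
    split. lra.
    assert (PI / k < L / 2); [|lra].
    apply (Rmult_lt_reg_l k); auto. field_simplify; try lra.
  - unfold Ff. replace (k * (L / 2 + PI / k) + - X) with PI by (unfold X; field; lra).
    rewrite cos_PI, sin_PI.
    intro Hc. assert (cos X = 0).
    { replace (X * cos X + - k * cos X * (L / 2 + PI / k)) with (- PI * cos X) in Hc
        by (unfold X; field; lra).
      assert (0 < PI) by apply PI_RGT_0. nra. }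
    assert (sin X = 0) by (rewrite H in Hg; lra).
    assert (Hsc := sin2_cos2 X). unfold Rsqr in Hsc. rewrite H, H0 in Hsc. lra.
Qed.
From Stdlib Require Import Lia.

Definition gg (x : R) := sin x - x * cos x.
Definition hh (n : nat) (r : R) := sin r - (r + INR n * PI) * cos r.

Lemma dhh n r : is_derive (hh n) r ((r + INR n * PI) * sin r).
Proof. unfold hh. auto_derive; auto. ring. Qed.

Lemma hh_cont n : continuity (hh n).
Proof. intros r. apply (cont_of_der _ r _ (dhh n r)). Qed.

Lemma hh_incr n a b : 0 <= a -> a < b -> b <= PI -> hh n a < hh n b.
Proof.
  intros. apply (mvt_strict (hh n) (fun r => (r + INR n * PI) * sin r)); auto.
  apply dhh. intros x Hx. apply Rmult_lt_0_compat.
  assert (0 <= INR n * PI) by (apply Rmult_le_pos; [apply pos_INR | left; apply PI_RGT_0]). lra.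
  apply sin_gt_0; lra.
Qed.

Lemma shift_n n r : sin (r + INR n * PI) = (-1) ^ n * sin r /\
                    cos (r + INR n * PI) = (-1) ^ n * cos r.
Proof.
  induction n as [|n IH]. simpl. rewrite Rmult_0_l, Rplus_0_r. split; ring.
  rewrite S_INR. replace (r + (INR n + 1) * PI) with ((r + INR n * PI) + PI) by ring.
  rewrite neg_sin, neg_cos. destruct IH as [-> ->]. simpl. split; ring.
Qed.

Lemma gg_shift n r : gg (r + INR n * PI) = (-1) ^ n * hh n r.
Proof. unfold gg, hh. destruct (shift_n n r) as [-> ->]. ring. Qed.

Lemma pow_m1_nz n : (-1) ^ n <> 0.
Proof. apply pow_nonzero. lra. Qed.

Definition Ex (x : R) := 0 < x /\ sin x * gg x = 0.

Lemma sin_shift_nz n r : 0 < r < PI -> sin (r + INR n * PI) <> 0.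
Proof.
  intros Hr. destruct (shift_n n r) as [-> _].
  apply Rmult_integral_contrapositive. split. apply pow_m1_nz.
  apply Rgt_not_eq, sin_gt_0; lra.
Qed.

Lemma Ex_ge_PI x : Ex x -> PI <= x.
Proof.
  intros [Hx Hz]. destruct (Rlt_le_dec x PI) as [Hl|]; auto. exfalso.
  assert (hh 0 0 < hh 0 x) by (apply hh_incr; lra).
  assert (hh 0 0 = 0) by (unfold hh; simpl; rewrite sin_0, cos_0; ring).
  assert (gg x = hh 0 x) by (unfold gg, hh; simpl; ring).
  assert (0 < sin x) by (apply sin_gt_0; lra).
  apply Rmult_integral in Hz. destruct Hz; lra.
Qed.

Lemma Ex_npi n : (1 <= n)%nat -> Ex (INR n * PI).
Proof.
  intros Hn. split.
  - apply Rmult_lt_0_compat. apply lt_0_INR; lia. apply PI_RGT_0.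
  - replace (INR n * PI) with (0 + INR n * PI) by ring.
    destruct (shift_n n 0) as [-> _]. rewrite sin_0. ring.
Qed.

Lemma gap n : (1 <= n)%nat -> exists t,
  INR n * PI < t < INR n * PI + PI / 2 /\ gg t = 0 /\
  (forall x, INR n * PI < x < INR n * PI + PI -> Ex x -> x = t) /\
  (forall d, 0 < d <= PI / 2 -> 1 < INR n * PI * sin d -> INR n * PI + PI / 2 - d < t).
Proof.
  intros Hn. assert (HP := PI_RGT_0).
  assert (HnP : PI <= INR n * PI).
  { rewrite <- (Rmult_1_l PI) at 1. apply Rmult_le_compat_r; [lra|]. apply (le_INR 1); auto. }
  destruct (IVT (hh n) 0 (PI / 2) (hh_cont n)) as [r [Hr Hhr]]; [lra| | |].
  - unfold hh. rewrite sin_0, cos_0. lra.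
  - unfold hh. rewrite sin_PI2, cos_PI2. lra.
  - assert (Hr0 : 0 < r).
    { destruct (Req_dec r 0) as [E|E]; [|lra]. subst r. unfold hh in Hhr.
      rewrite sin_0, cos_0 in Hhr. lra. }
    assert (HrP : r < PI / 2).
    { destruct (Req_dec r (PI / 2)) as [E|E]; [|lra]. subst r. unfold hh in Hhr.
      rewrite sin_PI2, cos_PI2 in Hhr. lra. }
    exists (r + INR n * PI). split; [lra|]. split.
    { rewrite gg_shift, Hhr. ring. }
    split.
    + intros x Hx [_ Hz].
      set (r' := x - INR n * PI).
      assert (Ex' : x = r' + INR n * PI) by (unfold r'; ring).
      rewrite Ex' in Hz. apply Rmult_integral in Hz. destruct Hz as [Hz|Hz].
      * exfalso. apply (sin_shift_nz n r'); auto. unfold r'; lra.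
      * rewrite gg_shift in Hz. apply Rmult_integral in Hz. destruct Hz as [Hz|Hz].
        exfalso; apply (pow_m1_nz n); auto.
        rewrite Ex'. f_equal.
        destruct (Rtotal_order r' r) as [Hlt|[Heq|Hgt]]; auto.
        -- assert (hh n r' < hh n r) by (apply hh_incr; unfold r' in *; lra). lra.
        -- assert (hh n r < hh n r') by (apply hh_incr; unfold r' in *; lra). lra.
    + intros d Hd Hsd.
      assert (Hneg : hh n (PI / 2 - d) < 0).
      { unfold hh. rewrite sin_minus, cos_minus, sin_PI2, cos_PI2.
        assert (0 < sin d) by (apply sin_gt_0; lra).
        assert (cos d <= 1) by apply COS_bound.
        assert (0 <= (PI / 2 - d) * sin d) by (apply Rmult_le_pos; lra).
        nra. }
      destruct (Rlt_le_dec (PI / 2 - d) r); [lra|].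
      destruct r0 as [Hlt|Heq].
      * assert (hh n r < hh n (PI / 2 - d)) by (apply hh_incr; lra). lra.
      * rewrite Heq in Hhr. lra.
Qed.

Lemma eig_fwd L s : 0 < L -> buckling_eigenvalue L s -> 0 < s /\ Ex (sqrt s * L / 2).
Proof.
  intros HL [u [Hu [Heq [H0 [H1 [HL0 [HL1 [x0 [Hx0 Hux]]]]]]]]].
  destruct (Rle_lt_dec s 0) as [Hs|Hs].
  - exfalso. apply Hux. eapply (nonpos_case L s u); eauto. lra.
  - split; auto. split.
    + assert (0 < sqrt s) by (apply sqrt_lt_R0; lra). 
      apply Rmult_lt_0_compat; [apply Rmult_lt_0_compat|]; lra.
    + destruct (Req_dec (sin (sqrt s * L / 2) * gg (sqrt s * L / 2)) 0) as [E|E]; auto.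
      exfalso. apply Hux. eapply (pos_case L s u); eauto; lra.
Qed.

Lemma eig_bwd L x : 0 < L -> Ex x -> buckling_eigenvalue L ((2 * x / L) ^ 2) /\
   sqrt ((2 * x / L) ^ 2) * L / 2 = x.
Proof.
  intros HL Hx. assert (HP := Ex_ge_PI x Hx). destruct Hx as [Hx0 Hz].
  assert (Hsq : sqrt ((2 * x / L) ^ 2) = 2 * x / L).
  { apply sqrt_pow2. apply Rlt_le, Rdiv_lt_0_compat; lra. }
  assert (Hxi : sqrt ((2 * x / L) ^ 2) * L / 2 = x) by (rewrite Hsq; field; lra).
  split; auto.
  assert (Hs : 0 < (2 * x / L) ^ 2) by (apply pow_lt, Rdiv_lt_0_compat; lra).
  apply Rmult_integral in Hz. destruct Hz as [Hz|Hz].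
  - apply eig_sin; rewrite ?Hxi; auto.
  - destruct (Req_dec x PI) as [E|E].
    + apply eig_sin; rewrite ?Hxi; auto. subst x; apply sin_PI.
    + apply eig_g; rewrite ?Hxi; auto. lra.
Qed.

Section Seq.
Variables (L : R) (sig : nat -> R).
Hypothesis HL : 0 < L.
Hypothesis Hinc : forall j, sig j < sig (S j).
Hypothesis Hset : forall s, buckling_eigenvalue L s <-> exists j, sig j = s.

Definition xi j := sqrt (sig j) * L / 2.

Lemma sig_mono i j : (i < j)%nat -> sig i < sig j.
Proof.
  intros H. induction H. apply Hinc. specialize (Hinc m). lra.
Qed.

Lemma sig_pos j : 0 < sig j /\ Ex (xi j).
Proof. apply (eig_fwd L); auto. apply Hset. eauto. Qed.

Lemma xi_mono i j : sig i < sig j -> xi i < xi j.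
Proof.
  intros H. unfold xi. destruct (sig_pos i) as [Hi _].
  apply Rmult_lt_compat_r; [lra|]. apply Rmult_lt_compat_r; [lra|].
  apply sqrt_lt_1; lra.
Qed.

Lemma xi_mono' i j : xi i < xi j -> sig i < sig j.
Proof.
  intros H. destruct (Rtotal_order (sig i) (sig j)) as [|[E|E]]; auto.
  - unfold xi in H. rewrite E in H. lra.
  - apply xi_mono in E. lra.
Qed.

Lemma Ex_is_xi x : Ex x -> exists i, xi i = x.
Proof.
  intros Hx. destruct (eig_bwd L x HL Hx) as [He Hxi].
  apply Hset in He. destruct He as [i Hi]. exists i. unfold xi. rewrite Hi. auto.
Qed.

Lemma xi_first x : Ex x -> xi 0 <= x.
Proof.
  intros Hx. destruct (Ex_is_xi x Hx) as [[|i] <-]. lra.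
  left. apply xi_mono, sig_mono. lia.
Qed.

Lemma xi_next j x : Ex x -> xi j < x -> xi (S j) <= x.
Proof.
  intros Hx Hl. destruct (Ex_is_xi x Hx) as [i <-].
  apply xi_mono' in Hl.
  destruct (Nat.lt_ge_cases j i) as [H|H].
  - destruct (Nat.eq_dec i (S j)) as [->|Hne]. lra.
    left. apply xi_mono, sig_mono. lia.
  - exfalso. destruct (Nat.eq_dec i j) as [->|Hne]. lra.
    assert (sig i < sig j) by (apply sig_mono; lia). lra.
Qed.

Lemma xi_odd m : xi (2 * m) = INR (S m) * PI ->
  INR (S m) * PI < xi (S (2 * m)) < INR (S m) * PI + PI / 2 /\ gg (xi (S (2 * m))) = 0 /\
  (forall d, 0 < d <= PI / 2 -> 1 < INR (S m) * PI * sin d ->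
     INR (S m) * PI + PI / 2 - d < xi (S (2 * m))).
Proof.
  intros He. destruct (gap (S m)) as [t [Ht [Hgt [Huniq Hd]]]]; [lia|].
  assert (HP := PI_RGT_0).
  assert (Ext : Ex t) by (split; [|rewrite Hgt; ring];
    assert (0 <= INR (S m) * PI) by (apply Rmult_le_pos; [apply pos_INR|lra]); lra).
  assert (H1 : xi (S (2 * m)) <= t) by (apply xi_next; auto; lra).
  assert (H2 : xi (2 * m) < xi (S (2 * m))) by (apply xi_mono, Hinc).
  assert (E : xi (S (2 * m)) = t).
  { apply Huniq. lra. apply sig_pos. }
  rewrite E. repeat split; try lra; auto.
Qed.

Lemma xi_even m : xi (2 * m) = INR (S m) * PI.
Proof.
  assert (HP := PI_RGT_0).
  induction m as [|m IH].
  - simpl. rewrite Rmult_1_l. apply Rle_antisym.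
    + apply xi_first. replace PI with (INR 1 * PI) by (simpl; ring). apply Ex_npi; lia.
    + apply Ex_ge_PI. apply sig_pos.
  - destruct (xi_odd m IH) as [Ho [Hg _]].
    replace (2 * S m)%nat with (S (S (2 * m))) by lia.
    assert (Ex2 : Ex (INR (S (S m)) * PI)) by (apply Ex_npi; lia).
    assert (HS : INR (S (S m)) = INR (S m) + 1) by apply S_INR.
    assert (H1 : xi (S (S (2 * m))) <= INR (S (S m)) * PI) by (apply xi_next; auto; nra).
    assert (H2 : xi (S (2 * m)) < xi (S (S (2 * m)))) by (apply xi_mono, Hinc).
    destruct H1 as [H1|H1]; auto. exfalso.
    destruct (gap (S m)) as [t [Ht [Hgt [Huniq Hd]]]]; [lia|].
    assert (E1 : xi (S (2 * m)) = t) by (apply Huniq; [nra|apply sig_pos]).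
    assert (E2 : xi (S (S (2 * m))) = t) by (apply Huniq; [nra|apply sig_pos]).
    lra.
Qed.

End Seq.
From Stdlib Require Import Reals Lra Lia ZArith.
From Coquelicot Require Import Coquelicot.
Open Scope R_scope.
Ltac fixeq := match goal with |- ?x = ?y => change (@eq R x y) end.

Lemma sum_SnR (a : nat -> R) n : sum_n a (S n) = sum_n a n + a (S n).
Proof. exact (sum_Sn a n). Qed.
Lemma sum_OR (a : nat -> R) : sum_n a 0 = a 0%nat.
Proof. exact (sum_O a). Qed.

Lemma sum_n_leR (a b : nat -> R) N : (forall j, (j <= N)%nat -> a j <= b j) ->
  sum_n a N <= sum_n b N.
Proof.
  induction N as [|N IH]; intros H.
  - rewrite !sum_OR. apply H. lia.
  - rewrite !sum_SnR. apply Rplus_le_compat. apply IH. intros; apply H; lia. apply H; lia.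
Qed.

Lemma sum_n_addR (a b : nat -> R) N : sum_n (fun j => a j + b j) N = sum_n a N + sum_n b N.
Proof.
  induction N as [|N IH]. rewrite !sum_OR. auto. rewrite !sum_SnR, IH. fixeq. ring.
Qed.

Lemma sum_n_extR (a b : nat -> R) N : (forall j, (j <= N)%nat -> a j = b j) ->
  sum_n a N = sum_n b N.
Proof. apply sum_n_ext_loc. Qed.

Lemma sum_n_zero_tail (a : nat -> R) m k : (forall j, (m < j)%nat -> a j = 0) ->
  sum_n a (m + k) = sum_n a m.
Proof.
  intros H. induction k as [|k IH]. rewrite Nat.add_0_r. auto.
  rewrite Nat.add_succ_r, sum_SnR, IH, H by lia. fixeq. ring.
Qed.

Lemma series_finite (a : nat -> R) N : (forall n, (N < n)%nat -> a n = 0) ->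
  Series a = sum_n a N.
Proof.
  intros H. apply is_series_unique.
  assert (Hl : is_lim_seq (sum_n a) (sum_n a N)).
  { apply (is_lim_seq_ext_loc (fun _ => sum_n a N)). 2: apply is_lim_seq_const.
    exists N. intros n Hn. replace n with (N + (n - N))%nat by lia.
    symmetry. apply sum_n_zero_tail. auto. }
  exact Hl.
Qed.

Lemma floor_ex v : 0 <= v -> exists m : nat, INR m <= v < INR m + 1.
Proof.
  intros Hv. destruct (base_Int_part v) as [H1 H2].
  assert (Hz : (0 <= Int_part v)%Z).
  { apply Z.lt_succ_r. apply lt_IZR. rewrite succ_IZR. lra. }
  exists (Z.to_nat (Int_part v)). rewrite INR_IZR_INZ, Z2Nat.id by auto. lra.
Qed.

Lemma sumsq c Y n : sum_n (fun j => Y ^ 2 - (INR j + c) ^ 2) n =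
  (INR n + 1) * Y ^ 2 - ((INR n + 1 + c - / 2) ^ 3 - (c - / 2) ^ 3) / 3 + (INR n + 1) / 12.
Proof.
  induction n as [|n IH].
  - rewrite sum_OR. simpl. fixeq. field.
  - rewrite sum_SnR, IH, S_INR. fixeq. field.
Qed.

Lemma Rmax_pos_l A : 0 <= A -> Rmax A 0 = A.
Proof. intros; apply Rmax_left; lra. Qed.
Lemma Rmax_neg_l A : A <= 0 -> Rmax A 0 = 0.
Proof. intros; apply Rmax_right; lra. Qed.

Lemma fsum c Y N : 1 <= c <= 2 -> c <= Y -> Y - c < INR N + 1 ->
  exists rem, sum_n (fun j => Rmax (Y ^ 2 - (INR j + c) ^ 2) 0) N =
     2 / 3 * Y ^ 3 - (c - / 2) * Y ^ 2 + rem /\ Rabs rem <= Y / 3 + 2.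
Proof.
  intros Hc HY HN.
  destruct (floor_ex (Y - c)) as [m Hm]; [lra|].
  assert (HmN : (m <= N)%nat).
  { destruct (le_lt_dec m N) as [|Hl]; auto. apply le_INR in Hl. rewrite S_INR in Hl.
    exfalso. lra. }
  assert (E1 : sum_n (fun j => Rmax (Y ^ 2 - (INR j + c) ^ 2) 0) N =
               sum_n (fun j => Rmax (Y ^ 2 - (INR j + c) ^ 2) 0) m).
  { replace N with (m + (N - m))%nat by lia. apply sum_n_zero_tail.
    intros j Hj. apply Rmax_neg_l. apply le_INR in Hj. rewrite S_INR in Hj.
    assert (0 <= Y) by lra. nra. }
  assert (E2 : sum_n (fun j => Rmax (Y ^ 2 - (INR j + c) ^ 2) 0) m =
               sum_n (fun j => Y ^ 2 - (INR j + c) ^ 2) m).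
  { apply sum_n_extR. intros j Hj. apply Rmax_pos_l. apply le_INR in Hj.
    assert (0 <= INR j) by apply pos_INR. nra. }
  rewrite E1, E2, sumsq.
  set (e := INR m + / 2 + c - Y).
  exists (- e ^ 2 * Y - e ^ 3 / 3 + (c - / 2) ^ 3 / 3 + (INR m + 1) / 12).
  split.
  - replace (INR m) with (Y + e - c - / 2) by (unfold e; ring). fixeq. field.
  - assert (He : - / 2 < e <= / 2) by (unfold e; lra).
    assert (He2 : e ^ 2 <= / 4) by nra.
    assert (He3 : Rabs (e ^ 3) <= / 8).
    { rewrite <- RPow_abs. assert (Rabs e <= / 2) by (apply Rabs_le; lra).
      assert (0 <= Rabs e) by apply Rabs_pos. simpl.
      assert (Rabs e * Rabs e <= / 4) by nra.
      assert (0 <= Rabs e * Rabs e) by nra. nra. }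
    assert (Hc3 : 0 <= (c - / 2) ^ 3 <= 27 / 8).
    { assert (/ 4 <= (c - / 2) * (c - / 2) <= 9 / 4) by (split; nra). simpl. split; nra. }
    assert (0 <= INR m) by apply pos_INR.
    assert (0 <= e ^ 2) by (apply pow2_ge_0).
    apply Rabs_le. apply Rabs_le_between in He3. split; nra.
Qed.

Section Fin.
Variables (L : R) (sig : nat -> R).
Hypothesis HL : 0 < L.
Hypothesis Hinc : forall j, sig j < sig (S j).
Hypothesis Hset : forall s, buckling_eigenvalue L s <-> exists j, sig j = s.

Let xi' := xi L sig.

Lemma rho_bounds j : INR j + 1 <= 2 * xi' j / PI <= INR j + 2.
Proof.
  assert (HP := PI_RGT_0).
  destruct (Nat.Even_or_Odd j) as [[m ->]|[m ->]].
  - unfold xi'. rewrite (xi_even L sig HL Hinc Hset m), mult_INR.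
    replace (INR 2) with 2 by (simpl; ring). rewrite S_INR.
    replace (2 * ((INR m + 1) * PI) / PI) with (2 * INR m + 2) by (field; lra). lra.
  - unfold xi'. replace (2 * m + 1)%nat with (S (2 * m)) by lia.
    destruct (xi_odd L sig HL Hinc Hset m (xi_even L sig HL Hinc Hset m)) as [[H1 H2] _].
    rewrite !S_INR, mult_INR in *. replace (INR 2) with 2 in * by (simpl; ring).
    split.
    + apply (Rmult_le_reg_r PI); auto. unfold Rdiv. rewrite Rmult_assoc, Rinv_l by lra. lra.
    + apply (Rmult_le_reg_r PI); auto. unfold Rdiv. rewrite Rmult_assoc, Rinv_l by lra. lra.
Qed.

Lemma rho_tail dl : 0 < dl <= 1 -> exists J, forall j, (J <= j)%nat ->
  INR j + 2 - dl <= 2 * xi' j / PI.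
Proof.
  intros Hdl. assert (HP := PI_RGT_0).
  set (d := dl * PI / 2).
  assert (Hd : 0 < d <= PI / 2) by (unfold d; split; nra).
  assert (Hsd : 0 < sin d) by (apply sin_gt_0; lra).
  destruct (floor_ex (/ (PI * sin d))) as [M HM].
  { left. apply Rinv_0_lt_compat, Rmult_lt_0_compat; lra. }
  exists (2 * S M)%nat. intros j Hj.
  destruct (Nat.Even_or_Odd j) as [[m ->]|[m ->]].
  - unfold xi'. rewrite (xi_even L sig HL Hinc Hset m), mult_INR.
    replace (INR 2) with 2 by (simpl; ring). rewrite S_INR.
    replace (2 * ((INR m + 1) * PI) / PI) with (2 * INR m + 2) by (field; lra). lra.
  - unfold xi'. replace (2 * m + 1)%nat with (S (2 * m)) by lia.
    destruct (xi_odd L sig HL Hinc Hset m (xi_even L sig HL Hinc Hset m)) as [_ [_ Ht]].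
    assert (HmM : (M <= m)%nat) by lia.
    apply le_INR in HmM.
    assert (Hlt : 1 < INR (S m) * PI * sin d).
    { rewrite S_INR.
      assert (/ (PI * sin d) * (PI * sin d) = 1) by (field; lra).
      assert (0 < PI * sin d) by nra. nra. }
    specialize (Ht d Hd Hlt).
    rewrite !S_INR, mult_INR in *. replace (INR 2) with 2 in * by (simpl; ring).
    apply (Rmult_le_reg_r PI); auto. unfold Rdiv. rewrite Rmult_assoc, Rinv_l by lra.
    unfold d in Ht. lra.
Qed.

Lemma sig_rho j : sig j = (PI / L) ^ 2 * (2 * xi' j / PI) ^ 2.
Proof.
  assert (HP := PI_RGT_0). destruct (sig_pos L sig HL Hset j) as [Hs _].
  unfold xi', xi. rewrite <- (sqrt_sqrt (sig j)) at 1 by lra. field. lra.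
Qed.

End Fin.

Lemma Rmax_scale b B : 0 < b -> Rmax (b * B) 0 = b * Rmax B 0.
Proof.
  intros Hb. unfold Rmax. destruct (Rle_dec (b * B) 0), (Rle_dec B 0); try ring; nra.
Qed.
Lemma Rmax_mono z s t : t <= s -> Rmax (z - s) 0 <= Rmax (z - t) 0.
Proof. intros. unfold Rmax. destruct (Rle_dec (z - s) 0), (Rle_dec (z - t) 0); lra. Qed.
Lemma Rmax_shift A K : 0 <= K -> Rmax (A + K) 0 <= Rmax A 0 + K.
Proof. intros. unfold Rmax. destruct (Rle_dec (A + K) 0), (Rle_dec A 0); lra. Qed.
Lemma sum_n_scalR b (a : nat -> R) N : sum_n (fun j => b * a j) N = b * sum_n a N.
Proof.
  induction N as [|N IH]. rewrite !sum_OR. auto. rewrite !sum_SnR, IH. fixeq. ring.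
Qed.

Theorem theorem1p4 (L : R) (sig : nat -> R) :
  0 < L ->
  (forall j, sig j < sig (S j)) ->
  (forall s, buckling_eigenvalue L s <-> exists j, sig j = s) ->
  forall eps : R, 0 < eps ->
    exists M : R, forall z : R, M < z ->
      Rabs (riesz1 sig z
            - (2 * L / (3 * PI) * Rpower z (3 / 2) - 3 / 2 * z)) <= eps * z.
Proof.
  intros HL Hinc Hset eps Heps.
  assert (HP := PI_RGT_0).
  set (al := PI / L). assert (Hal : 0 < al) by (unfold al; apply Rdiv_lt_0_compat; lra).
  set (be := al ^ 2). assert (Hbe : 0 < be) by (unfold be; apply pow_lt; lra).
  set (dl := Rmin (eps / 2) 1).
  assert (Hdl : 0 < dl <= 1) by (unfold dl; split; [apply Rmin_glb_lt; lra | apply Rmin_r]).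
  assert (Hdl2 : dl <= eps / 2) by apply Rmin_l.
  destruct (rho_tail L sig HL Hinc Hset dl Hdl) as [J HJ].
  set (K := (INR J + 2) ^ 2).
  assert (HK : 0 <= K) by (unfold K; apply pow2_ge_0).
  set (B := / 3 + 2 + 3 * K).
  set (Y0 := Rmax 2 (2 * B / eps)).
  assert (HY0 : 2 <= Y0) by apply Rmax_l.
  assert (HY0' : 2 * B / eps <= Y0) by apply Rmax_r.
  exists ((al * Y0) ^ 2). intros z Hz.
  assert (Hz0 : 0 < z) by (assert (0 < (al * Y0) ^ 2) by (apply pow_lt; nra); lra).
  set (sz := sqrt z).
  assert (Hsz : sz * sz = z) by (apply sqrt_sqrt; lra).
  assert (Hsz0 : al * Y0 < sz).
  { unfold sz. rewrite <- (sqrt_pow2 (al * Y0)) by nra. apply sqrt_lt_1_alt.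
    split; [apply pow2_ge_0|lra]. }
  set (Y := sz / al).
  assert (HYY0 : Y0 < Y) by (unfold Y; apply (Rmult_lt_reg_r al); auto;
     unfold Rdiv; rewrite Rmult_assoc, Rinv_l by lra; lra).
  assert (HzY : z = be * Y ^ 2) by (unfold be, Y; rewrite <- Hsz; field; lra).
  assert (HY2 : 2 < Y) by lra.
  assert (HYB : 2 * B <= eps * Y).
  { assert (2 * B / eps * eps = 2 * B) by (field; lra). nra. }
  destruct (floor_ex Y) as [m Hm]; [lra|].
  set (N := S m).
  assert (HN : INR N = INR m + 1) by apply S_INR.
  set (a := fun j => pos_part (z - sig j)).
  assert (Hser : riesz1 sig z = sum_n a N).
  { unfold riesz1. apply series_finite. intros n Hn. unfold a, pos_part.
    apply Rmax_neg_l. rewrite (sig_rho L sig HL Hset n), HzY.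
    destruct (rho_bounds L sig HL Hinc Hset n) as [H1 _].
    apply le_INR in Hn. rewrite S_INR in Hn.
    fold al be. set (r := 2 * xi L sig n / PI) in *.
    assert (Y < r) by lra. assert (Y ^ 2 <= r ^ 2) by (apply pow_incr; lra). nra. }
  destruct (fsum 2 Y N) as [r2 [Hs2 Hr2]]; try lra.
  assert (Hlo : be * sum_n (fun j => Rmax (Y ^ 2 - (INR j + 2) ^ 2) 0) N <= sum_n a N).
  { rewrite <- sum_n_scalR. apply sum_n_leR. intros j _.
    rewrite <- Rmax_scale by auto. unfold a, pos_part.
    replace (be * (Y ^ 2 - (INR j + 2) ^ 2)) with (z - be * (INR j + 2) ^ 2) by (rewrite HzY; ring).
    apply Rmax_mono. rewrite (sig_rho L sig HL Hset j).
    destruct (rho_bounds L sig HL Hinc Hset j) as [H1 H2].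
    fold al be. assert (0 <= INR j) by apply pos_INR.
    apply Rmult_le_compat_l; [lra|]. apply pow_incr. lra. }
  destruct (fsum (2 - dl) Y N) as [rd [Hsd Hrd]]; try lra.
  assert (Hup : sum_n a N <= be * (sum_n (fun j => Rmax (Y ^ 2 - (INR j + (2 - dl)) ^ 2) 0) N
                + INR (S N) * K)).
  { rewrite <- sum_n_const, <- sum_n_addR, <- sum_n_scalR. apply sum_n_leR. intros j _.
    unfold a, pos_part.
    assert (Hsj : be * ((INR j + (2 - dl)) ^ 2 - K) <= sig j).
    { rewrite (sig_rho L sig HL Hset j). fold al be. apply Rmult_le_compat_l; [lra|].
      destruct (rho_bounds L sig HL Hinc Hset j) as [H1 H2].
      assert (0 <= INR j) by apply pos_INR.
      set (r := 2 * xi L sig j / PI) in *.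
      destruct (le_lt_dec J j) as [HjJ|HjJ].
      - specialize (HJ j HjJ). fold r in HJ.
        assert ((INR j + (2 - dl)) ^ 2 <= r ^ 2) by (apply pow_incr; lra). lra.
      - apply lt_INR in HjJ.
        assert ((INR j + (2 - dl)) ^ 2 <= K) by (unfold K; apply pow_incr; lra).
        assert (0 <= r ^ 2) by apply pow2_ge_0. lra. }
    eapply Rle_trans. apply (Rmax_mono z _ _ Hsj).
    replace (z - be * ((INR j + (2 - dl)) ^ 2 - K)) with
      (be * (Y ^ 2 - (INR j + (2 - dl)) ^ 2) + be * K) by (rewrite HzY; ring).
    eapply Rle_trans. apply Rmax_shift. nra.
    rewrite Rmax_scale by auto. lra. }
  assert (Hmain : 2 * L / (3 * PI) * Rpower z (3 / 2) = be * (2 / 3 * Y ^ 3)).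
  { replace (3 / 2) with (1 + / 2) by field.
    rewrite Rpower_plus, Rpower_1, Rpower_sqrt by auto. fold sz.
    rewrite <- Hsz. unfold be, Y, al. field. split; lra. }
  rewrite Hser, Hmain.
  rewrite Hs2 in Hlo. rewrite Hsd in Hup.
  assert (HQ : Y / 3 + 2 + (INR (S N)) * K <= eps / 2 * Y ^ 2).
  { rewrite S_INR, HN. assert (INR m + 1 + 1 <= Y + 2) by lra.
    assert ((INR m + 1 + 1) * K <= (Y + 2) * K) by (apply Rmult_le_compat_r; lra).
    assert (Y * B <= eps / 2 * Y ^ 2) by (simpl; nra).
    unfold B in *. nra. }
  apply Rabs_le_between in Hr2. apply Rabs_le_between in Hrd.
  rewrite HzY. apply Rabs_le. split.
  - assert (be * (- (Y / 3 + 2)) >= - (eps * (be * Y ^ 2))).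
    { assert (Y / 3 + 2 <= eps * Y ^ 2) by (assert (0 <= INR (S N) * K) by (apply Rmult_le_pos;
        [apply pos_INR|lra]); nra). nra. }
    assert (be * r2 >= be * (- (Y / 3 + 2))) by (apply Rle_ge, Rmult_le_compat_l; lra).
    nra.
  - assert (Hin : dl * Y ^ 2 + rd + INR (S N) * K <= eps * Y ^ 2).
    { assert (dl * Y ^ 2 <= eps / 2 * Y ^ 2) by (apply Rmult_le_compat_r; [apply pow2_ge_0|lra]).
      lra. }
    assert (be * (dl * Y ^ 2 + rd + INR (S N) * K) <= be * (eps * Y ^ 2))
      by (apply Rmult_le_compat_l; lra).
    nra.
Qed.
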